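(* Let $N\ge 2$ and let $p$ be a star path of length $N$ with edge matrix $E$. Let $K$ be the smallest positive integer such that circularly shifting the columns of $E$ by $K$ (i.e. replacing column $n$ by column $(n+K)\bmod N$ for every $n$) yields $E$ again. Then the order of rotational symmetry of $p$ is $O_{rot}=N/K$.
   Context: A path of length $N$ is a vector $p=(p_0,\dots,p_{N-1})$ whose entries are the integers $0,\dots,N-1$ in some order; indices are cyclic, $p_N=p_0$, $s_{-1}=s_{N-1}$; $x\bmod N$ denotes the remainder in $\{0,\dots,N-1\}$. Nodes $0,\dots,N-1$ are placed at equally spaced points clockwise around a circle; the shape of $p$ is the set of chords joining node $p_n$ to node $p_{n+1}$. The order of rotational symmetry $O_{rot}$ is the number of angles $\theta\in[0,2\pi)$ such that the rotation by $\theta$ about the center of the circle maps the shape onto itself. The path differences are $d_n=p_{n+1}-p_n$, and the steps are $s_n=d_n$ if $|d_n|<N/2$; $s_n=N/2$ if $|d_n|=N/2$; $s_n=d_n-N$ if $d_n>N/2$; $s_n=d_n+N$ if $d_n<-N/2$. $p$ is a star path if $|s_n|\neq1$ for all $n$. The edge matrix $E=(e_{in})\in\mathbb{Z}^{2\times N}$: for node $n$ let $k$ be the index with $p_k=n$; take $s_k$ and $-s_{k-1}$, replace each by $0$ if its absolute value equals $N/2$, and let $e_{1n}\le e_{2n}$ be these two integers sorted in nondecreasing order. *)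

(* Defs.v *)
From mathcomp Require Import all_boot all_order all_algebra.
Set Implicit Arguments. Unset Strict Implicit. Unset Printing Implicit Defensive.
Import Order.TTheory GRing.Theory Num.Theory.

Definition is_path (N : nat) (p : seq nat) : bool := perm_eq p (iota 0 N).

Section PathDefs.
Variable (p : seq nat).
Local Notation N := (size p).

Definition pv (n : nat) : nat := nth 0%N p (n %% N).

Definition pdiff (n : nat) : int := (Posz (pv n.+1) - Posz (pv n))%R.

Definition pstep (n : nat) : int :=
  let d := pdiff n in
  if (2 * absz d < N)%N then d
  else if (2 * absz d == N)%N then Posz (N./2)
  else if (0 < d)%R then (d - Posz N)%R
  else (d + Posz N)%R.

Definition star_path : bool := [forall n : 'I_N, absz (pstep n) != 1%N].

Definition zhalf (x : int) : int := if (2 * absz x == N)%N then 0%R else x.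

(* column of the edge matrix for node m: (e_{1m}, e_{2m}) *)
Definition edge_col (m : nat) : int * int :=
  let k := index m p in
  let a := zhalf (pstep k) in
  let b := zhalf (- pstep (k + N - 1)%N)%R in
  (Order.min a b, Order.max a b).

Definition edge_shift_inv (K : nat) : bool :=
  [forall n : 'I_N, edge_col ((n + K) %% N) == edge_col n].

(* the shape: node a and b are joined by a chord of p *)
Definition chord (a b : nat) : bool :=
  has (fun n => ((pv n == a) && (pv n.+1 == b)) || ((pv n == b) && (pv n.+1 == a)))
      (iota 0 N).

(* rotation by 2*pi*k/N (clockwise) sends node a to node (a+k) mod N;
   it maps the shape onto itself *)
Definition rot_sym (k : nat) : bool :=
  [forall a : 'I_N, forall b : 'I_N,
     chord a b == chord ((a + k) %% N) ((b + k) %% N)].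

Definition O_rot : nat := #|[pred k : 'I_N | rot_sym k]|.

End PathDefs.

(* Main.v *)
Require Import Defs.
From mathcomp Require Import all_boot all_order all_algebra.
From mathcomp Require Import zify.
Import Order.TTheory GRing.Theory Num.Theory.

Lemma path_props N p : is_path N p ->
  [/\ size p = N, uniq p & forall m, (m \in p) = (m < N)].
Proof.
move=> H; split; first by rewrite (perm_size H) size_iota.
  by rewrite (perm_uniq H) iota_uniq.
by move=> m; rewrite (perm_mem H) mem_iota.
Qed.

Lemma pv_lt p n : is_path (size p) p -> 0 < size p -> pv p n < size p.
Proof.
move=> /path_props [_ _ Hm] N0; rewrite /pv -Hm; apply: mem_nth; exact: ltn_pmod.
Qed.

Lemma pv_inj p i j : is_path (size p) p -> 0 < size p -> pv p i = pv p j -> i %% size p = j %% size p.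
Proof.
move=> /path_props [_ U _] N0; rewrite /pv => /eqP.
by rewrite nth_uniq ?ltn_pmod // => /eqP.
Qed.

Lemma pv_index p m : is_path (size p) p -> m < size p -> pv p (index m p) = m /\ index m p < size p.
Proof.
move=> /path_props [_ _ Hm] mN.
have hi : index m p < size p by rewrite index_mem Hm.
by rewrite /pv modn_small // nth_index ?Hm.
Qed.

Lemma pv_mod p n : pv p (n %% size p) = pv p n.
Proof. by rewrite /pv modn_mod. Qed.

Lemma mod2 N x : x < N + N -> x %% N = if x < N then x else x - N.
Proof.
case: ifP => h; first by rewrite modn_small.
move=> h2. have -> : x = (x - N) + N by lia.
rewrite modnDr modn_small; lia.
Qed.

Definition g (N r : nat) : int :=
  if (2 * r < N)%N then Posz r else if (2 * r == N)%N then 0%R else (Posz r - Posz N)%R.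
Definition off (N a b : nat) : nat := (b + N - a) %% N.

Lemma off_expl N a b : a < N -> b < N -> off N a b = if a <= b then b - a else b + N - a.
Proof.
move=> ha hb; rewrite /off mod2; last lia.
case: ifP; case: ifP; lia.
Qed.

Lemma zstep p n : is_path (size p) p -> 0 < size p ->
  zhalf p (pstep p n) = g (size p) (off (size p) (pv p n) (pv p n.+1)).
Proof.
move=> Hp N0; have h1 := pv_lt p n Hp N0; have h2 := pv_lt p n.+1 Hp N0.
rewrite off_expl //.
move: h1 h2; rewrite /zhalf /pstep /pdiff /g.
move: (pv p n) (pv p n.+1) (size p) => y x N h1 h2.
case: ifP; case: ifP; repeat case: ifP; lia.
Qed.

Lemma zstepN p n : is_path (size p) p -> 0 < size p ->
  zhalf p (- pstep p n) = g (size p) (off (size p) (pv p n.+1) (pv p n)).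
Proof.
move=> Hp N0; have h1 := pv_lt p n Hp N0; have h2 := pv_lt p n.+1 Hp N0.
rewrite off_expl //.
move: h1 h2; rewrite /zhalf /pstep /pdiff /g.
move: (pv p n) (pv p n.+1) (size p) => y x N h1 h2.
case: ifP; case: ifP; repeat case: ifP; lia.
Qed.

Definition n1 p a := pv p (index a p).+1.
Definition n2 p a := pv p (index a p + size p - 1).

Lemma edge_colE p a : is_path (size p) p -> 0 < size p -> a < size p ->
  edge_col p a = (Order.min (g (size p) (off (size p) a (n1 p a))) (g (size p) (off (size p) a (n2 p a))),
                  Order.max (g (size p) (off (size p) a (n1 p a))) (g (size p) (off (size p) a (n2 p a)))).
Proof.
move=> Hp N0 aN; rewrite /edge_col /n1 /n2.
have [e1 e2] := pv_index p a Hp aN.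
rewrite zstep // zstepN // e1.
have -> : (index a p + size p - 1).+1 = index a p + size p by lia.
have -> : pv p (index a p + size p) = a by rewrite -pv_mod modnDr pv_mod e1.
by [].
Qed.

Definition peq {T : Type} (a b c d : T) : Prop := (a = c /\ b = d) \/ (a = d /\ b = c).

Lemma sortpairE (a b c d : int) :
  (Order.min a b, Order.max a b) = (Order.min c d, Order.max c d) <-> peq a b c d.
Proof.
rewrite /peq; split.
  by case=> h1 h2; lia.
by case=> [[-> ->]|[-> ->]] //; rewrite minC maxC.
Qed.

Lemma peq_map {T U : Type} (P : T -> Prop) (f : T -> U) a b c d :
  (forall x y, P x -> P y -> f x = f y -> x = y) -> P a -> P b -> P c -> P d ->
  peq (f a) (f b) (f c) (f d) <-> peq a b c d.
Proof.
move=> inj Pa Pb Pc Pd; rewrite /peq; split.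
  case=> [[h1 h2]|[h1 h2]]; [left|right]; split; apply: inj => //.
by case=> [[-> ->]|[-> ->]]; [left|right].
Qed.

Lemma g_inj N x y : 0 < x < N -> 0 < y < N -> g N x = g N y -> x = y.
Proof. rewrite /g => hx hy; repeat case: ifP; lia. Qed.

Lemma off_inj N m x y : m < N -> x < N -> y < N -> off N m x = off N m y -> x = y.
Proof. move=> hm hx hy; rewrite !off_expl //; repeat case: ifP; lia. Qed.

Lemma off_lt N m x : 0 < N -> off N m x < N.
Proof. by move=> h; rewrite /off ltn_pmod. Qed.

Lemma off_pos N m x : m < N -> x < N -> x <> m -> 0 < off N m x.
Proof. move=> hm hx; rewrite off_expl //; case: ifP; lia. Qed.

Lemma off_shift N n v k : n < N -> v < N ->
  off N ((n + k) %% N) ((v + k) %% N) = off N n v.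
Proof.
move=> hn hv; have N0 : 0 < N by lia.
rewrite -(modnDmr n) -(modnDmr v).
have hk : k %% N < N by rewrite ltn_pmod.
move: (k %% N) hk => k' hk.
rewrite (mod2 _ (n+k')); last lia.
rewrite (mod2 _ (v+k')); last lia.
rewrite !off_expl //; repeat case: ifP; lia.
Qed.

Lemma chordE p a b : is_path (size p) p -> 0 < size p -> a < size p -> b < size p ->
  chord p a b = (b == n1 p a) || (b == n2 p a).
Proof.
move=> Hp N0 aN bN; rewrite /chord /n1 /n2.
have [e1 e2] := pv_index p a Hp aN.
apply/hasP/idP.
  case=> n; rewrite mem_iota => /andP [_ nN] /orP [/andP [/eqP h1 /eqP h2]|/andP [/eqP h1 /eqP h2]].
    have : n %% size p = index a p %% size p by apply: pv_inj => //; rewrite e1.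
    rewrite !modn_small // => hn; by rewrite -h2 hn eqxx.
  have : n.+1 %% size p = index a p %% size p by apply: pv_inj => //; rewrite e1.
  rewrite (modn_small e2) => hk.
  apply/orP; right; rewrite -h1 -pv_mod -[in X in _ == X]pv_mod; apply/eqP; congr (pv p _).
  rewrite -hk mod2; last lia. rewrite [in RHS]mod2; last lia.
  rewrite (mod2 _ n.+1); last lia. repeat case: ifP; lia.
case/orP=> /eqP hb.
  exists (index a p); first by rewrite mem_iota.
  by rewrite e1 hb !eqxx.
exists ((index a p + size p - 1) %% size p); first by rewrite mem_iota ltn_pmod.
apply/orP; right; rewrite pv_mod hb eqxx /=.
rewrite -pv_mod -[(_ %% _).+1]addn1 modnDml pv_mod.
have -> : index a p + size p - 1 + 1 = index a p + size p by lia.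
by rewrite -pv_mod modnDr pv_mod e1.
Qed.

Lemma n_facts p a : is_path (size p) p -> 1 < size p -> a < size p ->
  [/\ n1 p a < size p, n2 p a < size p, n1 p a <> a & n2 p a <> a].
Proof.
move=> Hp N1 aN; have N0 : 0 < size p by lia.
have [e1 e2] := pv_index p a Hp aN.
split; try exact: pv_lt.
  move=> h; have := pv_inj p _ _ Hp N0 (etrans h (esym e1)).
  rewrite (modn_small e2) (mod2 _ (index a p).+1); last lia. case: ifP; lia.
move=> h; have := pv_inj p _ _ Hp N0 (etrans h (esym e1)).
rewrite (modn_small e2) (mod2 _ (index a p + size p - 1)); last lia. case: ifP; lia.
Qed.

Lemma n12_neq p a : is_path (size p) p -> 2 < size p -> a < size p -> n1 p a <> n2 p a.
Proof.
move=> Hp N1 aN; have N0 : 0 < size p by lia.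
have [e1 e2] := pv_index p a Hp aN.
move=> h; have := pv_inj p _ _ Hp N0 h.
rewrite (mod2 _ (index a p).+1); last lia.
rewrite (mod2 _ (index a p + size p - 1)); last lia. repeat case: ifP; lia.
Qed.

Lemma col_iff p k n : is_path (size p) p -> 1 < size p -> n < size p ->
  edge_col p ((n + k) %% size p) = edge_col p n <->
  peq (n1 p ((n + k) %% size p)) (n2 p ((n + k) %% size p))
      ((n1 p n + k) %% size p) ((n2 p n + k) %% size p).
Proof.
move=> Hp N1 nN; have N0 : 0 < size p by lia.
set m := (n + k) %% size p.
have mN : m < size p by rewrite ltn_pmod.
have [a1 a2 a3 a4] := n_facts p m Hp N1 mN.
have [b1 b2 b3 b4] := n_facts p n Hp N1 nN.
rewrite (edge_colE p m Hp N0 mN) (edge_colE p n Hp N0 nN) sortpairE.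
rewrite (peq_map (fun r => 0 < r < size p) (g (size p))); first last.
- by rewrite off_pos // off_lt.
- by rewrite off_pos // off_lt.
- by rewrite off_pos // off_lt.
- by rewrite off_pos // off_lt.
- move=> x y hx hy; exact: (g_inj (size p) x y).
rewrite -(off_shift _ _ _ k nN b1) -(off_shift _ _ _ k nN b2) -/m.
apply: (peq_map (fun x => x < size p) (off (size p) m)).
- move=> x y hx hy; exact: (off_inj (size p) m x y).
- by [].
- by [].
- by rewrite ltn_pmod.
- by rewrite ltn_pmod.
Qed.

Lemma shift_eq N k x y : x < N -> y < N -> ((x + k) %% N == (y + k) %% N) = (x == y).
Proof. by move=> hx hy; rewrite eqn_modDr !modn_small. Qed.

Lemma rot_iff p k : is_path (size p) p -> 2 < size p -> k < size p ->
  rot_sym p k <-> (forall n, n < size p ->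
  peq (n1 p ((n + k) %% size p)) (n2 p ((n + k) %% size p))
      ((n1 p n + k) %% size p) ((n2 p n + k) %% size p)).
Proof.
move=> Hp N2 kN; have N0 : 0 < size p by lia. have N1 : 1 < size p by lia.
split.
  move=> /forallP R n nN.
  set m := (n + k) %% size p.
  have mN : m < size p by rewrite ltn_pmod.
  have [a1 a2 a3 a4] := n_facts p m Hp N1 mN.
  have [b1 b2 b3 b4] := n_facts p n Hp N1 nN.
  have key : forall u, u < size p -> chord p m u ->
      u = (n1 p n + k) %% size p \/ u = (n2 p n + k) %% size p.
    move=> u uN cu.
    set b := (u + (size p - k)) %% size p.
    have bN : b < size p by rewrite ltn_pmod.
    have hb : (b + k) %% size p = u.
      rewrite /b modnDml.
      have -> : u + (size p - k) + k = u + size p by lia.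
      by rewrite modnDr modn_small.
    have := R (Ordinal nN) => /forallP /(_ (Ordinal bN)) /eqP /=.
    rewrite -/m hb cu chordE // => /orP [/eqP e|/eqP e]; [left|right]; by rewrite -hb e.
  have h1 := key _ a1; have h2 := key _ a2.
  rewrite !chordE // !eqxx /= orbT in h1 h2.
  have := n12_neq p m Hp N2 mN.
  rewrite /peq; case: (h1 isT) => e1; case: (h2 isT) => e2; rewrite e1 e2.
  - by move=> h; case: h.
  - by move=> _; left.
  - by move=> _; right.
  - by move=> h; case: h.
move=> H; apply/forallP => a; apply/forallP => b; apply/eqP.
set m := (a + k) %% size p.
have mN : m < size p by rewrite ltn_pmod.
have [b1 b2 b3 b4] := n_facts p a Hp N1 (ltn_ord a).
rewrite chordE // chordE ?ltn_pmod //.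
case: (H a (ltn_ord a)) => [[-> ->]|[-> ->]]; rewrite !shift_eq //; by rewrite orbC.
Qed.

Lemma rot_E p k : is_path (size p) p -> 2 < size p -> k < size p ->
  rot_sym p k = edge_shift_inv p k.
Proof.
move=> Hp N2 kN; have N1 : 1 < size p by lia.
apply/idP/idP.
  move/(rot_iff p k Hp N2 kN) => H; apply/forallP => n; apply/eqP.
  by apply/(col_iff p k n Hp N1 (ltn_ord n)); apply: H.
move/forallP => H; apply/(rot_iff p k Hp N2 kN) => n nN.
by apply/(col_iff p k n Hp N1 nN); apply/eqP; apply: (H (Ordinal nN)).
Qed.

Lemma N_ge3 p : is_path (size p) p -> 1 < size p -> star_path p -> 2 < size p.
Proof.
move=> Hp N1 /forallP S; rewrite ltn_neqAle N1 andbT; apply/eqP => E2.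
have N0 : 0 < size p by lia.
have := S (Ordinal N0); rewrite /pstep /pdiff /=.
have h0 := pv_lt p 0 Hp N0; have h1 := pv_lt p 1 Hp N0.
have hne : pv p 1 <> pv p 0.
  move=> /(pv_inj p _ _ Hp N0); rewrite -E2 //.
move: h0 h1 hne; rewrite -E2 /=.
move: (pv p 0) (pv p 1) => x y hx hy hne.
repeat case: ifP; lia.
Qed.

Lemma sum_mult K m : 0 < K -> \sum_(0 <= k < K * m) (K %| k : nat) = m.
Proof.
move=> K0; elim: m => [|m IH]; first by rewrite muln0 big_geq.
rewrite (big_cat_nat (n := K * m)) ?leq_mul2l ?leqnSn ?orbT //= IH.
have -> : K * m.+1 = K * m + K by rewrite mulnS addnC.
rewrite -{1}[K * m]add0n big_addn.
have -> : K * m + K - K * m = K by lia.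
clear IH; case: K K0 => [//|K] _.
rewrite big_nat_recl //= add0n dvdn_mulr // big1_seq ?addn0 ?add1n ?addn1 //.
move=> i /andP [_]; rewrite mem_iota => /andP [_ hi].
rewrite dvdn_addl ?dvdn_mulr // /dvdn modn_small //; lia.
Qed.

Lemma card_mult N K : 0 < K -> K %| N -> #|[pred k : 'I_N | K %| k]| = N %/ K.
Proof.
move=> K0 /dvdnP [m ->]; rewrite mulnK // mulnC.
rewrite -sum1_card big_mkcond /=.
rewrite -[in RHS](sum_mult K m K0) big_mkord; apply: eq_bigr => i _.
by rewrite inE; case: (K %| i).
Qed.

Lemma E_mod p k : edge_shift_inv p k = edge_shift_inv p (k %% size p).
Proof. by apply: eq_forallb => n; rewrite modnDmr. Qed.

Lemma E_0 p : edge_shift_inv p 0.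
Proof. by apply/forallP => n; rewrite addn0 modn_small. Qed.

Lemma E_add p a b : 0 < size p -> edge_shift_inv p a -> edge_shift_inv p b ->
  edge_shift_inv p (a + b).
Proof.
move=> N0 /forallP Ha /forallP Hb; apply/forallP => n.
have hn : (n + b) %% size p < size p by rewrite ltn_pmod.
have := Ha (Ordinal hn); rewrite /= modnDml.
have -> : n + b + a = n + (a + b) by lia.
move=> /eqP ->; exact: Hb.
Qed.

Lemma E_mul p K j : 0 < size p -> edge_shift_inv p K -> edge_shift_inv p (K * j).
Proof.
move=> N0 HK; elim: j => [|j IH]; first by rewrite muln0 E_0.
by rewrite mulnS E_add.
Qed.

Lemma E_sub p k t : 0 < size p -> edge_shift_inv p k -> edge_shift_inv p t -> t <= k ->
  edge_shift_inv p (k - t).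
Proof.
move=> N0 Hk Ht tk.
have H := E_add p k _ N0 Hk (E_mul p t (size p - 1) N0 Ht).
rewrite E_mod in H; rewrite E_mod.
have e : k + t * (size p - 1) = t * size p + (k - t).
  have := leq_pmulr t N0; rewrite mulnBr muln1; lia.
by rewrite e modnMDl in H.
Qed.

Lemma E_modK p K k : 0 < size p -> edge_shift_inv p K -> edge_shift_inv p k ->
  edge_shift_inv p (k %% K).
Proof.
move=> N0 HK Hk.
have e : k %% K = k - k %/ K * K by rewrite {2}(divn_eq k K) addKn.
rewrite e; apply: E_sub => //; first by rewrite mulnC E_mul.
exact: leq_trunc_div.
Qed.

Theorem mainTheorem6 (N : nat) (p : seq nat) (K : nat) :
  (2 <= N)%N -> is_path N p -> star_path p ->
  (0 < K)%N -> edge_shift_inv p K ->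
  (forall K' : nat, (0 < K')%N -> (K' < K)%N -> ~~ edge_shift_inv p K') ->
  ((O_rot p)%:R = (N%:R / K%:R) :> rat)%R.
Proof.
move=> N2 Hp S K0 HK Hmin.
have [sz _ _] := path_props _ _ Hp.
subst N.
have N0 : 0 < size p by lia.
have N3 := N_ge3 p Hp N2 S.
have divE : forall k, edge_shift_inv p k = (K %| k).
  move=> k; apply/idP/idP.
    move=> Hk; have := E_modK p K k N0 HK Hk.
    case: (posnP (k %% K)) => [h|h]; first by rewrite /dvdn h.
    by move=> H; move: (Hmin _ h (ltn_pmod k K0)); rewrite H.
  by move/divnK <-; rewrite mulnC E_mul.
have KN : K %| size p by rewrite -divE E_mod modnn E_0.
rewrite -natf_div //; congr (_ %:R)%R.
rewrite /O_rot -card_mult //; apply: eq_card => k; rewrite !inE.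
by rewrite rot_E // divE.
Qed.
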